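(* Let $k$ be a field, $A=kQ_A/I_A$ an indecomposable finite-dimensional monomial algebra with vertices $e_1,\dots,e_n$, and $B$ the algebra obtained from $A$ by gluing the distinct non-isolated vertices $e_1$ and $e_n$. Then there is an algebra monomorphism $Z(A)\hookrightarrow Z(B)$, and $\dim_kZ(B)=\dim_kZ(A)+\mathrm{nsp}(1,n)$.
   Context: Monomial: $A=kQ_A/I_A$, $Q_A$ a finite quiver, $I_A$ admissible, generated by a minimal set $Z_A$ of paths of length $\ge2$; $\mathcal B_A$ is the set of paths (including trivial ones) not containing an element of $Z_A$ as a subpath, a basis of $A$. Gluing: $B$ is the subalgebra of $A$ generated by $f_1=e_1+e_n$, $f_i=e_i$ ($2\le i\le n-1$) and all arrows ($B\cong kQ_B/I_B$, $Q_B$ obtained by identifying $e_1,e_n$, $I_B$ generated by $I_A$ and all newly formed length-2 paths through the new vertex). $Z(\cdot)$ denotes the center. A non-special path is a path $p\in\mathcal B_A$ either from $e_1$ to $e_n$ or from $e_n$ to $e_1$ such that $ap\in I_A$ and $pb\in I_A$ for all arrows $a,b$ of $Q_A$; $\mathrm{nsp}(1,n)$ is the number of non-special paths. *)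

(* Defs.v *)
From HB Require Import structures.
From mathcomp Require Import all_boot all_order all_algebra.
Set Implicit Arguments.
Unset Strict Implicit.
Unset Printing Implicit Defensive.
Import GRing.Theory.
Local Open Scope ring_scope.

(* A path is a start vertex together with the sequence of its arrows, read   *)
(* in the order of traversal; trivial path e_v = (v, [::]).                  *)
Section Monomial.
Variables (V Ar : finType) (s t : Ar -> V).

Definition qpath : Type := (V * seq Ar)%type.

Fixpoint chain (v : V) (p : seq Ar) : bool :=
  if p is a :: p' then (s a == v) && chain (t a) p' else true.

Definition valid (p : qpath) : bool := chain p.1 p.2.
Definition pstart (p : qpath) : V := p.1.
Definition pend (p : qpath) : V := last p.1 (map t p.2).
Definition plen (p : qpath) : nat := size p.2.
Definition pcat (p q : qpath) : qpath := (p.1, p.2 ++ q.2).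
Definition arrow_path (a : Ar) : qpath := (s a, [:: a]).

(* Z is a minimal set of paths of length >= 2 (the generators Z_A of I_A). *)
Definition relation_set (Z : seq (seq Ar)) : Prop :=
  uniq Z /\
  (forall z, z \in Z -> (2 <= size z)%N /\ exists v, chain v z) /\
  (forall z z', z \in Z -> z' \in Z -> z != z' -> ~~ infix z z').

Variable Z : seq (seq Ar).

Definition avoidsZ (p : qpath) : bool := all (fun z => ~~ infix z p.2) Z.
Definition inBA (p : qpath) : bool := valid p && avoidsZ p.

(* N bounds the lengths of paths not in I: every path of length N lies in I.
   Together with lengths >= 2 of Z this is admissibility of I, and it says
   that A is finite-dimensional. *)
Definition fin_bound (N : nat) : Prop :=
  forall p : qpath, valid p -> plen p = N -> ~~ avoidsZ p.

Fixpoint words (l : nat) : seq (seq Ar) :=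
  if l is l'.+1 then [seq a :: x | a <- enum Ar, x <- words l'] else [:: [::]].

(* Enumeration of B_A (complete when fin_bound N holds). *)
Definition basis (N : nat) : seq qpath :=
  [seq p <- [seq (v, x) | v <- enum V, x <- flatten [seq words l | l <- iota 0 N]]
  | inBA p].

(* product of two paths in A: Some (pq) if pq is a nonzero basis path, else None (= 0) *)
Definition prodpath (p q : qpath) : option qpath :=
  if (pend p == pstart q) && inBA (pcat p q) then Some (pcat p q) else None.

Variables (K : fieldType) (N : nat).
Local Notation d := (size (basis N)).
(* elements of A = coordinate row vectors w.r.t. the basis B_A *)
Definition bpath (i : 'I_d) : qpath := tnth (in_tuple (basis N)) i.

Definition bvec (r : option qpath) : 'rV[K]_d :=
  \row_i (if Some (bpath i) == r then 1 else 0).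

Definition mmul (x y : 'rV[K]_d) : 'rV[K]_d :=
  \sum_(i < d) \sum_(j < d) (x 0 i * y 0 j) *: bvec (prodpath (bpath i) (bpath j)).

Definition munit : 'rV[K]_d :=
  \row_i (if (bpath i).2 == [::] then 1 else 0).

Definition central (x : 'rV[K]_d) : Prop := forall y, mmul x y = mmul y x.

(* dim_k Z(A): the kernel of x |-> (x e_j - e_j x)_j *)
Definition commf (x : 'rV[K]_d) : 'rV[K]_(d * d) :=
  mxvec (\matrix_(j < d) (mmul x (delta_mx 0 j) - mmul (delta_mx 0 j) x)).

Definition centre_dim : nat := \rank (kermx (lin1_mx commf)).

Definition indecomposable : Prop :=
  forall x, central x -> mmul x x = x -> x = 0 \/ x = munit.

Definition nsp (u w : V) : nat :=
  count (fun p => (((pstart p == u) && (pend p == w)) || ((pstart p == w) && (pend p == u)))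
                  && [forall a : Ar, prodpath (arrow_path a) p == None]
                  && [forall b : Ar, prodpath p (arrow_path b) == None])
        (basis N).

End Monomial.
Arguments mmul {V Ar} s t Z K N x y.
Arguments central {V Ar} s t Z K N x.
Arguments commf {V Ar} s t Z K N x.

Definition non_isolated (V Ar : finType) (s t : Ar -> V) (v : V) : Prop :=
  exists a : Ar, (s a == v) || (t a == v).

Definition centre_alg_mono (K : fieldType) (dA dB : nat)
  (mulA : 'rV[K]_dA -> 'rV[K]_dA -> 'rV[K]_dA) (oneA : 'rV[K]_dA)
  (mulB : 'rV[K]_dB -> 'rV[K]_dB -> 'rV[K]_dB) (oneB : 'rV[K]_dB)
  (f : 'rV[K]_dA -> 'rV[K]_dB) : Prop :=
  let cA x := forall y, mulA x y = mulA y x in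
  let cB x := forall y, mulB x y = mulB y x in
  [/\ forall x, cA x -> cB (f x),
      forall (a : K) x y, cA x -> cA y -> f (a *: x + y) = a *: f x + f y,
      forall x y, cA x -> cA y -> f (mulA x y) = mulB (f x) (f y),
      f oneA = oneB
    & forall x y, cA x -> cA y -> f x = f y -> x = y].

(* Gluing the distinct vertices u (= e_1) and w (= e_n): B = kQ_B/I_B.       *)
Section Glue.
Variables (V Ar : finType) (s t : Ar -> V) (u w : V) (huw : u != w).

Definition glueV (v : V) : {x : V | x != w} :=
  insubd (exist (fun x => x != w) u huw) v.

Definition sB (a : Ar) : {x : V | x != w} := glueV (s a).
Definition tB (a : Ar) : {x : V | x != w} := glueV (t a).

(* I_B is generated by Z_A and all newly formed length-2 paths *)
Definition ZB (Z : seq (seq Ar)) : seq (seq Ar) :=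
  Z ++ [seq [:: x.1; x.2] | x <- [seq (a, b) | a <- enum Ar, b <- enum Ar]
                          & (tB x.1 == sB x.2) && (t x.1 != s x.2)].
End Glue.

(* Main.v *)
Require Import Defs.
From HB Require Import structures.
From mathcomp Require Import all_boot all_order all_algebra.
From mathcomp Require Import ring zify.
Set Implicit Arguments.
Unset Strict Implicit.
Unset Printing Implicit Defensive.
Import GRing.Theory.
Local Open Scope ring_scope.

Module Helpers.


Section Vec.
Variables (T : eqType) (K : fieldType) (bs : seq T).
Local Notation d := (size bs).
Local Notation gb := (tnth (in_tuple bs)).
Definition vec (c : T -> K) : 'rV[K]_d := \row_i c (gb i).
Definition cf (x : 'rV[K]_d) (p : T) : K := \sum_i x 0 i * (gb i == p)%:R.
Hypothesis Hu : uniq bs.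

Lemma gb_inj : injective gb.
Proof.
move=> i j eq; apply: val_inj => /=.
have Hi : gb i = nth (gb i) bs i by exact: (tnth_nth (gb i) (in_tuple bs) i).
have Hj : gb j = nth (gb i) bs j by exact: (tnth_nth (gb i) (in_tuple bs) j).
rewrite -(index_uniq (gb i) (ltn_ord i) Hu) -(index_uniq (gb i) (ltn_ord j) Hu).
by rewrite -Hi -Hj eq.
Qed.

Lemma cf_gb x i : cf x (gb i) = x 0 i.
Proof.
rewrite /cf (bigD1 i) //= eqxx mulr1 big1 ?addr0 // => j /negbTE ji.
by rewrite (inj_eq gb_inj) ji mulr0.
Qed.

Lemma gb_mem i : gb i \in bs.
Proof.
have -> : gb i = nth (gb i) bs i by exact: (tnth_nth (gb i) (in_tuple bs) i).
exact: mem_nth.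
Qed.

Lemma cf_out x p : p \notin bs -> cf x p = 0.
Proof.
move=> pn; rewrite /cf big1 // => i _.
have := gb_mem i.
by case: eqP => [->|]; rewrite ?(negbTE pn) ?mulr0.
Qed.

Lemma vec_cf x : vec (cf x) = x.
Proof. by apply/rowP => i; rewrite mxE cf_gb. Qed.

Lemma mem_gb p : p \in bs -> exists i, p = gb i.
Proof. by move=> pb; apply/tnthP. Qed.

Lemma cf_vec c p : p \in bs -> cf (vec c) p = c p.
Proof. by move=> /mem_gb [i ->]; rewrite cf_gb mxE. Qed.

Lemma vec_eq c c' : (forall p, p \in bs -> c p = c' p) -> vec c = vec c'.
Proof. move=> H; apply/rowP => i. rewrite !mxE. apply: H. exact: gb_mem. Qed.

Lemma vec_eqP c c' : vec c = vec c' -> forall p, p \in bs -> c p = c' p.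
Proof. by move=> H p pb; rewrite -(cf_vec c pb) -(cf_vec c' pb) H. Qed.

Lemma cf_lin a x y p : cf (a *: x + y) p = a * cf x p + cf y p.
Proof.
rewrite /cf mulr_sumr -big_split /=; apply: eq_bigr => i _.
by rewrite !mxE mulrDl mulrA.
Qed.

Lemma cf_add x y p : cf (x + y) p = cf x p + cf y p.
Proof.
rewrite /cf -big_split /=; apply: eq_bigr => i _.
by rewrite !mxE mulrDl.
Qed.

Lemma cf_scale a x p : cf (a *: x) p = a * cf x p.
Proof.
rewrite /cf mulr_sumr; apply: eq_bigr => i _.
by rewrite !mxE mulrA.
Qed.

Lemma cf_sub x y p : cf (x - y) p = cf x p - cf y p.
Proof.
rewrite /cf -sumrB; apply: eq_bigr => i _.
by rewrite !mxE mulrBl.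
Qed.

Lemma cf0 p : cf 0 p = 0.
Proof. by rewrite /cf big1 // => i _; rewrite mxE mul0r. Qed.

End Vec.

Lemma lin1E (K : fieldType) m n (f : 'rV[K]_m -> 'rV[K]_n) :
  (forall a x y, f (a *: x + y) = a *: f x + f y) -> forall u, u *m lin1_mx f = f u.
Proof.
move=> lf u; rewrite mulmx_sum_row {2}(row_sum_delta u).
have f0 : f 0 = 0.
  by have := lf (-1) 0 0; rewrite scaler0 addr0 scaleN1r addNr.
elim/big_rec2: _ => [|j y1 y2 _ ->]; first by rewrite f0.
rewrite lf; congr (_ *: _ + _); apply/rowP => k; rewrite !mxE //.
Qed.

Section Quiver.
Variables (V Ar : finType) (s t : Ar -> V) (Z : seq (seq Ar)) (N : nat).
Hypothesis HZ2 : forall z, z \in Z -> (2 <= size z)%N.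
Hypothesis HN : fin_bound s t Z N.
Local Notation qp := (qpath V Ar).
Local Notation bs := (basis s t Z N).

Lemma chain_cat v x y :
  chain s t v (x ++ y) = chain s t v x && chain s t (last v (map t x)) y.
Proof. by elim: x v => [|a x IH] v //=; rewrite IH andbA. Qed.

Lemma mem_words l x : (x \in words Ar l) = (size x == l).
Proof.
elim: l x => [|l IH] [|a x] //=.
- by apply/negbTE/allpairsP => -[[b y] [_ _]].
- apply/allpairsP/eqP => [[[b y] /= [_ yin [_ ->]]]|[sz]].
    by move: yin; rewrite IH => /eqP ->.
  by exists (a, x); split => //=; [rewrite mem_enum | rewrite IH sz].
Qed.

Lemma uniq_words l : uniq (words Ar l).
Proof.
elim: l => //= l IH; apply: allpairs_uniq => //; first exact: enum_uniq.
by move=> [a x] [b y] _ _ /= [-> ->].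
Qed.

Lemma mem_flat n x : (x \in flatten [seq words Ar l | l <- iota 0 n]) = (size x < n)%N.
Proof.
apply/flattenP/idP => [[ws /mapP [l]]|lt].
  by rewrite mem_iota => /andP[_ lt] -> ; rewrite mem_words => /eqP ->.
exists (words Ar (size x)); last by rewrite mem_words.
by apply/mapP; exists (size x) => //; rewrite mem_iota.
Qed.

Lemma uniq_flat n : uniq (flatten [seq words Ar l | l <- iota 0 n]).
Proof.
elim: n => // n IH; rewrite -addn1 iotaD map_cat flatten_cat cat_uniq IH /=.
rewrite cats0 uniq_words andbT; apply/hasPn => x.
by rewrite mem_words add0n mem_flat => /eqP ->; rewrite ltnn.
Qed.

Lemma inBA_lt p : inBA s t Z p -> (size p.2 < N)%N.
Proof.
case/andP => vp ap; rewrite ltnNge; apply/negP => le.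
have := HN (p := (p.1, take N p.2)).
rewrite /plen /= size_takel //.
have -> : valid s t (p.1, take N p.2).
  by move: vp; rewrite /valid -{1}(cat_take_drop N p.2) chain_cat => /andP[].
move=> /(_ isT erefl); apply/negP/negPn; apply/allP => z zZ.
apply/negP => inf; move/allP: ap => /(_ z zZ) /negP; apply.
by apply: infix_trans inf _; apply: prefixW; apply: prefix_take.
Qed.

Lemma mem_basis p : (p \in bs) = inBA s t Z p.
Proof.
rewrite mem_filter; case ib: (inBA s t Z p) => //=.
apply/allpairsP; exists (p.1, p.2); split => //=; last by case: p {ib}.
  by rewrite mem_enum.
by rewrite mem_flat inBA_lt.
Qed.

Lemma uniq_basis : uniq bs.
Proof.
apply: filter_uniq; apply: allpairs_uniq; [exact: enum_uniq|exact: uniq_flat|].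
by move=> [a x] [b y] _ _ /= [-> ->].
Qed.

Lemma inBA_triv v : inBA s t Z (v, [::]).
Proof.
rewrite /inBA /valid /= /avoidsZ; apply/allP => z zZ.
by rewrite infixs0; have := HZ2 zZ; case: z {zZ}.
Qed.

Definition pre (r : qp) k : qp := (r.1, take k r.2).
Definition suf (r : qp) k : qp := (pend t (pre r k), drop k r.2).

Lemma inBA_pre r k : inBA s t Z r -> inBA s t Z (pre r k).
Proof.
case/andP => vr ar; apply/andP; split.
  by move: vr; rewrite /valid -{1}(cat_take_drop k r.2) chain_cat => /andP[].
apply/allP => z zZ; apply/negP => inf; move/allP: ar => /(_ z zZ) /negP; apply.
by apply: infix_trans inf _; apply: prefixW; apply: prefix_take.
Qed.

Lemma inBA_suf r k : inBA s t Z r -> inBA s t Z (suf r k).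
Proof.
case/andP => vr ar; apply/andP; split.
  by move: vr; rewrite /valid -{1}(cat_take_drop k r.2) chain_cat => /andP[].
apply/allP => z zZ; apply/negP => inf; move/allP: ar => /(_ z zZ) /negP; apply.
by apply: infix_trans inf _; apply: suffixW; apply: suffix_drop.
Qed.

Lemma prodpath_pre_suf r k : inBA s t Z r -> (k <= size r.2)%N ->
  prodpath s t Z (pre r k) (suf r k) = Some r.
Proof.
move=> ir _; rewrite /prodpath /= eqxx /=.
by rewrite /pcat /= cat_take_drop; case: r ir => /= ? ? ->.
Qed.

Lemma prodpath_inv p q r : prodpath s t Z p q = Some r ->
  [/\ (size p.2 <= size r.2)%N, p = pre r (size p.2) & q = suf r (size p.2)].
Proof.
rewrite /prodpath; case: ifP => // /andP[/eqP e _] [<-].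
case: p e => p1 p2; case: q => q1 q2 /= e.
rewrite /pre /suf /= size_cat leq_addr take_size_cat // drop_size_cat //.
by split => //; rewrite -e /pre /pcat /= take_size_cat.
Qed.

Variable K : fieldType.

Definition mulf (c d : qp -> K) (r : qp) : K :=
  \sum_(k <- iota 0 (size r.2).+1) c (pre r k) * d (suf r k).

Lemma sum_ind (T : eqType) (l : seq T) (a : T) (G : T -> K) : uniq l ->
  \sum_(q <- l) G q * (q == a)%:R = (a \in l)%:R * G a.
Proof.
elim: l => [|b l IH] /=; first by rewrite big_nil mul0r.
case/andP => bl ul; rewrite big_cons IH // inE.
case: (eqVneq b a) bl => [->|ba] bl /=; last by rewrite mulr0 add0r.
by rewrite (negbTE bl) mul0r addr0 mulr1 mul1r.
Qed.

Lemma fact_sum (F : qp -> qp -> K) r : inBA s t Z r ->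
  \sum_(p <- bs) \sum_(q <- bs) F p q * (Some r == prodpath s t Z p q)%:R
  = \sum_(k <- iota 0 (size r.2).+1) F (pre r k) (suf r k).
Proof.
move=> ir.
pose cond (p : qp) := ((size p.2 <= size r.2)%N && (p == pre r (size p.2))).
transitivity (\sum_(p <- bs | cond p) F p (suf r (size p.2))).
  rewrite [RHS]big_mkcond /=; apply: eq_big_seq => p pb.
  case cp: (cond p).
    move: cp => /andP[le /eqP ep].
    rewrite (eq_bigr (fun q => F p q * (q == suf r (size p.2))%:R)).
      by rewrite sum_ind ?uniq_basis // mem_basis inBA_suf // mul1r.
    move=> q _; suff -> : (Some r == prodpath s t Z p q) = (q == suf r (size p.2)) by [].
    apply/eqP/eqP => [e|->]; first by case: (prodpath_inv (esym e)).
    by rewrite {1}ep prodpath_pre_suf.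
  rewrite big1 // => q _; case: eqP => [e|]; last by rewrite mulr0.
  by case: (prodpath_inv (esym e)) => le ep _; move: cp; rewrite /cond le -ep eqxx.
rewrite -big_filter.
have -> : [seq p <- bs | cond p] = [seq p <- bs | cond p] by [].
rewrite (perm_big (map (pre r) (iota 0 (size r.2).+1))).
  rewrite big_map; apply: eq_big_seq => k; rewrite mem_iota add0n ltnS => /andP[_ le].
  by rewrite /pre /= size_takel.
apply: uniq_perm; first by apply: filter_uniq; apply: uniq_basis.
  rewrite map_inj_in_uniq ?iota_uniq // => i j.
  rewrite !mem_iota !add0n !ltnS => /andP[_ li] /andP[_ lj] [] /(congr1 size).
  by rewrite !size_takel.
move=> p; rewrite mem_filter mem_basis; apply/andP/mapP => [[/andP[le /eqP ep] _]|[k]].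
  by exists (size p.2) => //; rewrite mem_iota add0n ltnS le.
rewrite mem_iota add0n ltnS => /andP[_ le] ->; split; last exact: inBA_pre.
by rewrite /cond /pre /= size_takel // le eqxx.
Qed.



Local Notation gb := (tnth (in_tuple bs)).
Local Notation dd := (size bs).

Lemma mmulE (x y : 'rV[K]_dd) :
  mmul s t Z K N x y = vec bs (mulf (cf x) (cf y)).
Proof.
apply/rowP => l; rewrite [RHS]mxE /mulf -(fact_sum (fun p q => cf x p * cf y q)); last by rewrite -mem_basis gb_mem.
rewrite [RHS]big_tnth summxE; apply: eq_bigr => i _.
rewrite [RHS]big_tnth summxE; apply: eq_bigr => j _.
rewrite !mxE !cf_gb ?uniq_basis //.
by case: eqP.
Qed.

Lemma mulf_ext c c' d d' r : (forall p, c p = c' p) -> (forall p, d p = d' p) ->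
  mulf c d r = mulf c' d' r.
Proof. by move=> Hc Hd; apply: eq_bigr => k _; rewrite Hc Hd. Qed.

Lemma mulf_local c c' d d' r : inBA s t Z r ->
  (forall p, inBA s t Z p -> c p = c' p) -> (forall p, inBA s t Z p -> d p = d' p) ->
  mulf c d r = mulf c' d' r.
Proof.
by move=> ir Hc Hd; apply: eq_bigr => k _; rewrite Hc ?Hd ?inBA_pre ?inBA_suf.
Qed.

Lemma mulfDl a c c' d r :
  mulf (fun p => a * c p + c' p) d r = a * mulf c d r + mulf c' d r.
Proof.
rewrite /mulf mulr_sumr -big_split; apply: eq_bigr => k _.
by rewrite mulrDl mulrA.
Qed.

Lemma mulfDr a c d d' r :
  mulf c (fun p => a * d p + d' p) r = a * mulf c d r + mulf c d' r.
Proof.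
rewrite /mulf mulr_sumr -big_split; apply: eq_bigr => k _.
by rewrite mulrDr !mulrA [a * _]mulrC.
Qed.

Lemma vec_lin (a : K) (c c' : qp -> K) : vec bs (fun p => a * c p + c' p) = a *: vec bs c + vec bs c'.
Proof. by apply/rowP => i; rewrite !mxE. Qed.

Lemma mmulDl a x y z : mmul s t Z K N (a *: x + y) z =
  a *: mmul s t Z K N x z + mmul s t Z K N y z.
Proof.
rewrite !mmulE -vec_lin; apply: vec_eq => r _.
by rewrite -mulfDl; apply: mulf_ext => // p; rewrite cf_lin.
Qed.

Lemma mmulDr a x y z : mmul s t Z K N z (a *: x + y) =
  a *: mmul s t Z K N z x + mmul s t Z K N z y.
Proof.
rewrite !mmulE -vec_lin; apply: vec_eq => r _.
by rewrite -mulfDr; apply: mulf_ext => // p; rewrite cf_lin.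
Qed.

Definition fcent (c : qp -> K) :=
  forall d r, inBA s t Z r -> mulf c d r = mulf d c r.

Lemma centralE x : central s t Z K N x <-> fcent (cf x).
Proof.
split => [H d r ir|H y].
  have := H (vec bs d); rewrite !mmulE => /(vec_eqP uniq_basis) /(_ r).
  rewrite mem_basis => /(_ ir) e.
  have Hd : forall p, inBA s t Z p -> cf (vec bs d) p = d p.
    by move=> p ip; rewrite cf_vec ?uniq_basis ?mem_basis.
  rewrite -(mulf_local (c := cf x) (d := cf (vec bs d))) //.
  by rewrite e; apply: mulf_local.
rewrite !mmulE; apply: vec_eq => r; rewrite mem_basis => ir; exact: H.
Qed.

Lemma mmul_sum x y : mmul s t Z K N x y =
  \sum_j y 0 j *: mmul s t Z K N x (delta_mx 0 j).
Proof.
rewrite -(lin1E (f := mmul s t Z K N x)); last by move=> a u v; rewrite mmulDr.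
rewrite mulmx_sum_row; apply: eq_bigr => j _; congr (_ *: _).
by apply/rowP => k; rewrite !mxE.
Qed.

Lemma mmul_sum' x y : mmul s t Z K N y x =
  \sum_j y 0 j *: mmul s t Z K N (delta_mx 0 j) x.
Proof.
rewrite -(lin1E (f := fun y => mmul s t Z K N y x)); last by move=> a u v; rewrite mmulDl.
rewrite mulmx_sum_row; apply: eq_bigr => j _; congr (_ *: _).
by apply/rowP => k; rewrite !mxE.
Qed.

Lemma commf_lin a x y : commf s t Z K N (a *: x + y) =
  a *: commf s t Z K N x + commf s t Z K N y.
Proof.
rewrite /commf -linearP; congr mxvec; apply/matrixP => j k.
by rewrite !mxE mmulDl mmulDr !mxE; ring.
Qed.

Lemma kerE x : (x <= kermx (lin1_mx (commf s t Z K N)))%MS <-> central s t Z K N x.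
Proof.
rewrite sub_kermx lin1E; last exact: commf_lin.
rewrite /commf mxvec_eq0; split => [/eqP H y|H].
  rewrite mmul_sum mmul_sum'; apply: eq_bigr => j _; congr (_ *: _).
  have := congr1 (row j) H; rewrite row0 => /rowP Hj; apply/rowP => k.
  by have := Hj k; rewrite !mxE => /eqP; rewrite subr_eq0 => /eqP.
by apply/eqP/matrixP => j k; rewrite !mxE H subrr.
Qed.

End Quiver.

Section Glue.
Variables (V Ar : finType) (s t : Ar -> V) (Z : seq (seq Ar)) (u w : V) (huw : u != w).
Local Notation VB := {x : V | x != w}.
Local Notation sB' := (sB s huw).
Local Notation tB' := (tB t huw).
Local Notation ZB' := (ZB s t huw Z).
Local Notation gV := (glueV huw).

Definition glue (p : qpath V Ar) : qpath VB Ar := (gV p.1, p.2).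
Definition jA (q : qpath VB Ar) : qpath V Ar :=
  if q.2 is a :: _ then (s a, q.2) else (val q.1, [::]).

Lemma gV_val (v : VB) : gV (val v) = v.
Proof. exact: valKd. Qed.

Lemma val_gV x : val (gV x) = if x != w then x else u.
Proof. by rewrite /glueV val_insubd. Qed.

Lemma gV_eq x y : gV x = gV y -> x != y ->
  (x == u) && (y == w) || (x == w) && (y == u).
Proof.
move=> /(congr1 val); rewrite !val_gV => e ne.
case: (eqVneq x w) e ne => [->|xw]; case: (eqVneq y w) => [->|yw] //= e ne.
- by rewrite -e eqxx orbT.
- by rewrite e eqxx.
- by rewrite e eqxx in ne.
Qed.

Lemma pend_glue p : pend tB' (glue p) = gV (pend t p).
Proof.
rewrite /pend /glue /=.
have -> : map tB' p.2 = map gV (map t p.2) by rewrite -map_comp.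
by rewrite last_map.
Qed.

Lemma chain_glue v x : chain s t v x -> chain sB' tB' (gV v) x.
Proof.
elim: x v => [|a x IH] v //= /andP[/eqP <- cx]; rewrite /sB eqxx /=.
exact: IH.
Qed.

Lemma mem_new a b :
  ([:: a; b] \in [seq [:: x.1; x.2] | x <- [seq (a, b) | a <- enum Ar, b <- enum Ar]
                          & (tB' x.1 == sB' x.2) && (t x.1 != s x.2)])
  = (tB' a == sB' b) && (t a != s b).
Proof.
apply/mapP/idP => [[[a' b']]|H].
  by rewrite mem_filter => /andP[H _] [-> ->].
by exists (a, b) => //; rewrite mem_filter H; apply/allpairsP; exists (a, b); rewrite !mem_enum.
Qed.

Lemma chain_pair v x a b : chain s t v x -> infix [:: a; b] x -> t a == s b.
Proof.
move=> cx /infixP [p [q ex]]; move: cx; rewrite ex chain_cat => /andP[_] /=.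
by case/and3P => _ /eqP ->.
Qed.

Lemma HZB2 : (forall z, z \in Z -> 2 <= size z)%N -> (forall z, z \in ZB' -> 2 <= size z)%N.
Proof.
move=> H z; rewrite mem_cat => /orP[/H //|/mapP [[a b] _ ->]] //.
Qed.

Lemma inB_glue p : inBA s t Z p -> inBA sB' tB' ZB' (glue p).
Proof.
case/andP => vp ap; apply/andP; split; first exact: chain_glue.
apply/allP => z; rewrite mem_cat => /orP[zZ|]; first by move/allP: ap; apply.
case/mapP => [[a b]]; rewrite mem_filter => /andP[/andP[_ ne] _] -> /=.
by apply/negP => /(chain_pair vp); rewrite (negbTE ne).
Qed.

Lemma chainB_A a x :
  chain sB' tB' (sB' a) (a :: x) ->
  (forall b c, infix [:: b; c] (a :: x) -> tB' b == sB' c -> t b == s c) ->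
  chain s t (s a) (a :: x).
Proof.
elim: x a => [|b x IH] a /=; first by move=> _ _; rewrite eqxx.
case/andP => _ /andP[/eqP e cx] H; rewrite eqxx /=.
have tab : t a == s b.
  apply: H; last by rewrite e.
  by rewrite !eqxx prefix0s.
rewrite eq_sym tab /=.
suff /andP[_ H2] : chain s t (s b) (b :: x) by exact: H2.
apply: IH; first by rewrite /= eqxx cx.
move=> b' c' inf; apply: H; move: inf; rewrite infix_consl /= => /orP[->|->];
  by rewrite ?orbT.
Qed.

Lemma inA_jA q : (forall z, z \in Z -> 2 <= size z)%N -> inBA sB' tB' ZB' q ->
  inBA s t Z (jA q) /\ glue (jA q) = q.
Proof.
move=> HZ2; case: q => v [|a x] /=.
  by move=> _; split; [apply: inBA_triv | rewrite /glue /= gV_val].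
case/andP => /= /andP[/eqP ev cx] aq; split; last by rewrite /glue /=; congr pair; exact: ev.
apply/andP; split.
  apply: chainB_A; first by rewrite /= eqxx.
  move=> b c inf e; apply/negPn/negP => ne.
  move/allP: aq => /(_ [:: b; c]); rewrite mem_cat mem_new e ne orbT => /(_ isT).
  by rewrite inf.
apply/allP => z zZ; move/allP: aq => /(_ z); rewrite mem_cat zZ; exact.
Qed.

Lemma jA_glue p : inBA s t Z p -> p != (w, [::]) -> jA (glue p) = p.
Proof.
case: p => v [|a x] /=.
  move=> _ ne; rewrite /jA /glue /= val_gV.
  have vw : v != w by apply: contraNneq ne => ->.
  by rewrite vw.
by case/andP => /= /andP[/eqP e _] _ _; rewrite /jA /glue /= e.
Qed.

Lemma jA_glue_w : jA (glue (w, [::])) = (u, [::]).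
Proof. by rewrite /jA /glue /= val_gV eqxx. Qed.

Lemma pre_glue r k : pre (glue r) k = glue (pre r k).
Proof. by []. Qed.

Lemma suf_glue r k : suf tB' (glue r) k = glue (suf t r k).
Proof. by rewrite /suf pre_glue pend_glue. Qed.

Lemma mulf_glue (K : fieldType) (c d : qpath VB Ar -> K) r :
  mulf tB' c d (glue r) = mulf t (fun p => c (glue p)) (fun p => d (glue p)) r.
Proof. by apply: eq_bigr => k _; rewrite suf_glue. Qed.

End Glue.

Lemma sum_first (K : fieldType) n (F : nat -> K) :
  \sum_(k <- iota 0 n.+1) F k = F 0%N + \sum_(k <- iota 1 n) F k.
Proof. by rewrite /= big_cons. Qed.

Lemma sum_last (K : fieldType) n (F : nat -> K) :
  \sum_(k <- iota 0 n.+1) F k = \sum_(k <- iota 0 n) F k + F n.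
Proof. by rewrite -addn1 iotaD big_cat /= big_cons big_nil addr0. Qed.

Lemma sum_zero (K : fieldType) m n (F : nat -> K) :
  (forall k : nat, (m <= k)%N -> (k < m + n)%N -> F k = 0) -> \sum_(k <- iota m n) F k = 0.
Proof. by move=> H; rewrite big1_seq // => k /andP[_]; rewrite mem_iota => /andP[]; exact: H. Qed.

Ltac slia := repeat match goal with H : is_true (leq _ _) |- _ => revert H end;
  (try (move: (size _) => ?)); rewrite ?neq_ltn; intros; lia.

Section Comp.
Variables (V Ar : finType) (s t : Ar -> V) (Z : seq (seq Ar)) (K : fieldType).
Local Notation qp := (qpath V Ar).

Lemma pend_suf (r : qp) k : pend t (suf t r k) = pend t r.
Proof.
by rewrite /pend /suf /pre /= -[in RHS](cat_take_drop k r.2) map_cat last_cat.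
Qed.

Lemma pre0 (r : qp) : pre r 0 = (r.1, [::]).
Proof. by rewrite /pre take0. Qed.

Lemma suf0 (r : qp) : suf t r 0 = r.
Proof. by rewrite /suf pre0 drop0; case: r. Qed.

Lemma pre_full (r : qp) : pre r (size r.2) = r.
Proof. by case: r => v x; rewrite /pre /= take_size. Qed.

Lemma suf_full (r : qp) : suf t r (size r.2) = (pend t r, [::]).
Proof. by rewrite /suf pre_full drop_size. Qed.

Lemma mulf_trivl (c d : qp -> K) r : (forall p : qp, p.2 != [::] -> c p = 0) ->
  mulf t c d r = c (r.1, [::]) * d r.
Proof.
move=> Hc; rewrite /mulf sum_first suf0 pre0 sum_zero ?addr0 // => k Hk1 Hk2; rewrite Hc ?mul0r //= -size_eq0 size_takel; slia.
Qed.

Lemma mulf_trivr (c d : qp -> K) r : (forall p : qp, p.2 != [::] -> c p = 0) ->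
  mulf t d c r = d r * c (pend t r, [::]).
Proof.
move=> Hc; rewrite /mulf sum_last suf_full pre_full sum_zero ?add0r // => k Hk1 Hk2; rewrite [c _]Hc ?mulr0 //= -size_eq0 size_drop; slia.
Qed.

Lemma mulf_deltar (c : qp -> K) r : mulf t c (fun q => (q == r)%:R) r = c (r.1, [::]).
Proof.
rewrite /mulf sum_first suf0 pre0 eqxx mulr1 sum_zero ?addr0 // => k Hk1 Hk2; case: eqP; rewrite ?mulr0 // => /(congr1 (fun p => size p.2)).
rewrite /= size_drop; slia.
Qed.

Lemma mulf_deltal (c : qp -> K) r : mulf t (fun q => (q == r)%:R) c r = c (pend t r, [::]).
Proof.
rewrite /mulf sum_last suf_full pre_full eqxx mul1r sum_zero ?add0r // => k Hk1 Hk2; case: eqP; rewrite ?mul0r // => /(congr1 (fun p => size p.2)).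
rewrite /= size_takel; slia.
Qed.

Lemma chain_nth v x k b0 : chain s t v x -> (k < size x)%N ->
  s (nth b0 x k) == last v (map t (take k x)).
Proof.
move=> cx kx; move: cx; rewrite -{1}(cat_take_drop k x) chain_cat (drop_nth b0 kx) /=.
by case/andP => _ /andP[e _].
Qed.

Lemma arrow_right (r : qp) k : inBA s t Z r -> (k < size r.2)%N ->
  exists b, prodpath s t Z (pre r k) (arrow_path s b) = Some (pre r k.+1).
Proof.
case: r => v x ir /= kx; have [b0 _] : exists b0 : Ar, True.
  by case: x kx {ir} => // b0 *; exists b0.
have /andP[vr _] := ir.
have cv := chain_nth b0 vr kx.
exists (nth b0 x k).
have ep : pcat (pre (v, x) k) (arrow_path s (nth b0 x k)) = pre (v, x) k.+1.
  by rewrite /pcat /pre /= (take_nth b0 kx) cats1.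
rewrite /prodpath ep inBA_pre // andbT /= eq_sym.
by rewrite cv.
Qed.

Lemma arrow_left (r : qp) k : inBA s t Z r -> (k < size r.2)%N ->
  exists a, prodpath s t Z (arrow_path s a) (suf t r k.+1) = Some (suf t r k).
Proof.
case: r => v x ir /= kx; have [b0 _] : exists b0 : Ar, True.
  by case: x kx {ir} => // b0 *; exists b0.
have /andP[vr _] := ir.
have cv := chain_nth b0 vr kx.
exists (nth b0 x k).
have ep : pcat (arrow_path s (nth b0 x k)) (suf t (v, x) k.+1) = suf t (v, x) k.
  by rewrite /pcat /suf /pend /pre /= (drop_nth b0 kx) (eqP cv).
rewrite /prodpath ep inBA_suf // andbT.
rewrite /suf /pre /=.
have -> : pend t (v, take k.+1 x) = t (nth b0 x k).
  by rewrite /pend /= (take_nth b0 kx) map_rcons last_rcons.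
by rewrite eqxx.
Qed.

Lemma mulf_nsl (P : pred qp) (c d : qp -> K) r :
  (forall p, c p != 0 -> P p) ->
  (forall p, P p -> forall b, prodpath s t Z p (arrow_path s b) = None) ->
  inBA s t Z r -> mulf t c d r = c r * d (pend t r, [::]).
Proof.
move=> Hc HP ir; rewrite /mulf sum_last suf_full pre_full sum_zero ?add0r // => k Hk1 Hk2; have kn : (k < size r.2)%N by slia.
case: (eqVneq (c (pre r k)) 0) => [->|/Hc Pk]; first by rewrite mul0r.
by have [b] := arrow_right ir kn; rewrite HP.
Qed.

Lemma mulf_nsr (P : pred qp) (c d : qp -> K) r :
  (forall p, c p != 0 -> P p) ->
  (forall p, P p -> forall a, prodpath s t Z (arrow_path s a) p = None) ->
  inBA s t Z r -> mulf t d c r = d (r.1, [::]) * c r.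
Proof.
move=> Hc HP ir; rewrite /mulf sum_first suf0 pre0 sum_zero ?addr0 // => k Hk1 Hk2.
case: (eqVneq (c (suf t r k)) 0) => [->|/Hc Pk]; first by rewrite mulr0.
have kn' : (k.-1 < size r.2)%N by slia.
have ek : k = k.-1.+1 by slia.
by have [a] := arrow_left ir kn'; rewrite -ek HP.
Qed.

End Comp.

Lemma fcent_ext (V Ar : finType) (s t : Ar -> V) (Z : seq (seq Ar)) (K : fieldType)
  (c c' : qpath V Ar -> K) :
  (forall p, inBA s t Z p -> c p = c' p) -> fcent s t Z c' -> fcent s t Z c.
Proof.
move=> H Hc d r ir.
rewrite (mulf_local (c' := c') (d' := d) ir) // [RHS](mulf_local (c' := d) (d' := c') ir) //.
exact: Hc.
Qed.

Lemma prodpath_in (V Ar : finType) (s t : Ar -> V) (Z : seq (seq Ar)) p q r :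
  prodpath s t Z p q = Some r -> [/\ inBA s t Z r, r = pcat p q & pend t p = pstart q].
Proof. by rewrite /prodpath; case: ifP => // /andP[/eqP e i] [<-]. Qed.

Lemma pend_pcat (V Ar : finType) (t : Ar -> V) (p q : qpath V Ar) :
  pend t p = pstart q -> pend t (pcat p q) = pend t q.
Proof. by case: p q => v x [v' y]; rewrite /pend /pcat /= map_cat last_cat => ->. Qed.

Lemma pend1 (V Ar : finType) (t : Ar -> V) (q : qpath V Ar) a :
  q.2 = [:: a] -> pend t q = t a.
Proof. by case: q => v x /= ->. Qed.

Section Main.
Variables (k : fieldType) (V Ar : finType) (s t : Ar -> V) (Z : seq (seq Ar))
  (u w : V) (huw : u != w) (N NB : nat).
Hypothesis HZ2 : forall z, z \in Z -> (2 <= size z)%N.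
Hypothesis HNA : fin_bound s t Z N.
Hypothesis HNB : fin_bound (sB s huw) (tB t huw) (ZB s t huw Z) NB.
Hypothesis Hind : indecomposable s t Z k N.

Local Notation VB := {x : V | x != w}.
Local Notation sB' := (sB s huw).
Local Notation tB' := (tB t huw).
Local Notation ZB' := (ZB s t huw Z).
Local Notation qA := (qpath V Ar).
Local Notation qB := (qpath VB Ar).
Local Notation inA := (inBA s t Z).
Local Notation inB := (inBA sB' tB' ZB').
Local Notation gl := (glue huw).
Local Notation gV := (glueV huw).
Local Notation bsA := (basis s t Z N).
Local Notation bsB := (basis sB' tB' ZB' NB).

Definition nsP (p : qA) : bool :=
  (((pstart p == u) && (pend t p == w)) || ((pstart p == w) && (pend t p == u)))
  && [forall a : Ar, prodpath s t Z (arrow_path s a) p == None]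
  && [forall b : Ar, prodpath s t Z p (arrow_path s b) == None].

Lemma nsP_ends p : nsP p ->
  ((p.1 == u) && (pend t p == w)) || ((p.1 == w) && (pend t p == u)).
Proof. by case/andP => /andP[]. Qed.

Lemma nsP_l p : nsP p -> forall a, prodpath s t Z (arrow_path s a) p = None.
Proof. by case/andP => /andP[_ /forallP H] _ a; apply/eqP. Qed.

Lemma nsP_r p : nsP p -> forall b, prodpath s t Z p (arrow_path s b) = None.
Proof. by case/andP => _ /forallP H b; apply/eqP. Qed.

Lemma gVuw : gV u = gV w.
Proof. by apply: val_inj; rewrite !val_gV eqxx huw. Qed.

Lemma nsP_glue p : nsP p -> gV p.1 = gV (pend t p).
Proof.
by move/nsP_ends => /orP[] /andP[/eqP -> /eqP ->]; rewrite gVuw.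
Qed.

Lemma nsP_ne p : nsP p -> p.1 != pend t p.
Proof.
move/nsP_ends => /orP[] /andP[/eqP -> /eqP ->] //; by rewrite eq_sym.
Qed.

Lemma nsP_triv v : ~~ nsP (v, [::]).
Proof. by apply/negP => /nsP_ne; rewrite /pend /= eqxx. Qed.

Lemma ns_comm (c2 : qA -> k) (d' : qB -> k) r :
  (forall p, c2 p != 0 -> nsP p) -> inA r ->
  mulf t c2 (fun p => d' (gl p)) r = mulf t (fun p => d' (gl p)) c2 r.
Proof.
move=> Hc ir; rewrite (mulf_nsl (fun p => d' (gl p)) Hc nsP_r ir) (mulf_nsr (fun p => d' (gl p)) Hc nsP_l ir).
case: (eqVneq (c2 r) 0) => [->|/Hc nr]; first by rewrite mulr0 mul0r.
by rewrite mulrC /glue /= (nsP_glue nr).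
Qed.

Lemma transferB (c : qA -> k) :
  (forall p, inA p -> c (jA s (gl p)) = c p) ->
  (forall (d' : qB -> k) r, inA r ->
     mulf t c (fun p => d' (gl p)) r = mulf t (fun p => d' (gl p)) c r) ->
  fcent sB' tB' ZB' (fun q => c (jA s q)).
Proof.
move=> H1 H2 d' r' ir'; have [ir e] := inA_jA HZ2 ir'.
rewrite -e !mulf_glue.
rewrite (mulf_local (c' := c) (d' := fun p => d' (gl p)) ir H1) //.
rewrite [RHS](mulf_local (c' := fun p => d' (gl p)) (d' := c) ir _ H1) //.
exact: H2.
Qed.

Lemma triv_eq (c : qA -> k) : fcent s t Z c -> c (u, [::]) = c (w, [::]).
Proof.
move=> Hc.
have Hse : forall p, inA p -> c (p.1, [::]) = c (pend t p, [::]).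
  by move=> p ip; have := Hc (fun q => (q == p)%:R) p ip; rewrite mulf_deltar mulf_deltal.
pose e (p : qA) : k := if p.2 == [::] then (c p == c (u, [::]))%:R else 0.
have etriv : forall p : qA, p.2 != [::] -> e p = 0 by move=> p /negbTE; rewrite /e => ->.
pose xe := vec bsA e.
have cfe : forall p, inA p -> cf xe p = e p.
  by move=> p ip; rewrite cf_vec ?uniq_basis ?(mem_basis HNA).
have ce : central s t Z k N xe.
  apply/(centralE HNA); apply: (fcent_ext cfe) => d r ir.
  rewrite mulf_trivl // mulf_trivr //.
  by rewrite /e /= Hse // mulrC.
have ie : mmul s t Z k N xe xe = xe.
  rewrite (mmulE HNA) {3}/xe; apply: vec_eq => p; rewrite (mem_basis HNA) => ip.
  rewrite (mulf_local (c' := e) (d' := e) ip) // mulf_trivl //.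
  case: p ip => v [|a x] ip; last by rewrite [e (v, a :: x)]etriv ?mulr0.
  by rewrite /e /=; case: (c (v, [::]) == c (u, [::])); rewrite ?mulr1 ?mulr0.
have eu : e (u, [::]) = 1 by rewrite /e /= eqxx.
case: (Hind ce ie) => [e0|e1].
  have := cfe (u, [::]) (inBA_triv s t HZ2 u).
  by rewrite e0 cf0 eu => /eqP; rewrite eq_sym oner_eq0.
have mu : munit s t Z k N = vec bsA (fun p => (p.2 == [::])%:R).
  by apply/rowP => i; rewrite !mxE; case: eqP.
have := cfe (w, [::]) (inBA_triv s t HZ2 w).
rewrite e1 mu cf_vec ?uniq_basis ?(mem_basis HNA) ?inBA_triv //= /e /=.
by case: eqP => // _; rewrite /= ?mulr1n ?mulr0n => /eqP; rewrite oner_eq0.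
Qed.

Lemma centA_B (c : qA -> k) : fcent s t Z c -> fcent sB' tB' ZB' (fun q => c (jA s q)).
Proof.
move=> Hc; apply: transferB => [p ip|d' r ir]; last exact: Hc.
case: (eqVneq p (w, [::])) => [->|ne]; last by rewrite (jA_glue huw ip ne).
by rewrite jA_glue_w triv_eq.
Qed.

Lemma nsA_B (c : qA -> k) : (forall p, c p != 0 -> nsP p) -> fcent sB' tB' ZB' (fun q => c (jA s q)).
Proof.
move=> Hc; apply: transferB => [p ip|d' r ir]; last exact: ns_comm.
case: (eqVneq p (w, [::])) => [->|ne]; last by rewrite (jA_glue huw ip ne).
rewrite jA_glue_w.
have z v : c (v, [::]) = 0 by apply/eqP; apply: contraNT (nsP_triv v) => /Hc.
by rewrite !z.
Qed.

Section ClaimA.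
Variable c' : qB -> k.
Hypothesis Hc' : fcent sB' tB' ZB' c'.
Local Notation y := (fun p : qA => c' (gl p)).

Lemma Hy (d' : qB -> k) r : inA r ->
  mulf t y (fun p => d' (gl p)) r = mulf t (fun p => d' (gl p)) y r.
Proof. by move=> ir; rewrite -!mulf_glue; apply: Hc'; apply: inB_glue. Qed.

Lemma y_glue r : inA r -> y r != 0 -> gV r.1 = gV (pend t r).
Proof.
move=> ir yr; have := Hy (fun q => (q == (gV (pend t r), [::]))%:R) ir.
rewrite mulf_trivr; last by move=> [v [|a x]] //= _; rewrite /glue xpair_eqE andbF.
rewrite mulf_trivl; last by move=> [v [|a x]] //= _; rewrite /glue xpair_eqE andbF.
rewrite /glue /= !xpair_eqE !eqxx andbT mulr1; case: eqP => [e _ //|ne].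
by rewrite /= mulr0n mul0r => /eqP; rewrite (negbTE yr).
Qed.

Lemma y_ns r : inA r -> y r != 0 -> r.1 != pend t r -> nsP r.
Proof.
move=> ir yr ne; apply/andP; split; first (apply/andP; split).
- by have := gV_eq (y_glue ir yr) ne.
- apply/forallP => a; apply/eqP.
  case E: (prodpath s t Z (arrow_path s a) r) => [ar|] //; exfalso.
  have [iar ear ea] := prodpath_in E.
  have := Hy (fun q => (q.2 == [:: a])%:R) iar.
  rewrite [LHS]big1_seq; last first.
    move=> j _ /=; case: eqP => [e2|]; last by rewrite mulr0.
    move: ne; rewrite -(pend_pcat ea) -ear -(pend_suf t ar j) (@pend1 _ _ t (suf t ar j) a e2).
    by have ta : t a = r.1 := ea; rewrite ta eqxx.
  rewrite /mulf; have -> : size ar.2 = (size r.2).+1 by rewrite ear.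
  rewrite sum_first /= big_cons take0 /= mulr0n mul0r add0r.
  have e1 : take 1 ar.2 = [:: a] by rewrite ear /= take0.
  have ta : t a = r.1 := ea.
  have e2 : suf t ar 1 = r.
    by rewrite ear /suf /pre /pcat /= take0 drop0 /pend /= ta; case: (r).
  rewrite e1 e2 eqxx mul1r sum_zero ?addr0 => [e0|j j1 j2]; first by rewrite -e0 eqxx in yr.
  case: eqP => [/(congr1 size)|]; rewrite ?mul0r // ear /= size_takel /=; slia.
- apply/forallP => b; apply/eqP.
  case E: (prodpath s t Z r (arrow_path s b)) => [rb|] //; exfalso.
  have [irb erb eb] := prodpath_in E.
  have := Hy (fun q => (q.2 == [:: b])%:R) irb.
  rewrite [RHS]big1_seq; last first.
    move=> j _ /=; case: eqP => [e2|]; last by rewrite mul0r.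
    have /andP[vp _] := inBA_pre j irb.
    move: vp; rewrite /valid /pre /= e2 /= andbT => /eqP e3.
    have sb : pend t r = s b := eb.
    by move: ne; rewrite sb e3 erb /= eqxx.
  rewrite /mulf; have -> : size rb.2 = (size r.2).+1 by rewrite erb /= size_cat addn1.
  rewrite sum_last sum_last.
  have e5 : (gl (suf t rb (size r.2).+1)).2 = [::].
    by rewrite /suf /= erb /= drop_oversize // size_cat /= addn1.
  have e6 : (gl (suf t rb (size r.2))).2 = [:: b] by rewrite /suf /= erb /= drop_size_cat.
  have e7 : pre rb (size r.2) = r by rewrite erb /pre /= take_size_cat //; case: (r).
  rewrite e5 e6 e7 eqxx mulr1 /= mulr0n mulr0 addr0 sum_zero ?add0r => [e0|j _ j2].
    by rewrite e0 eqxx in yr.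
  case: eqP; rewrite ?mulr0 // => /(congr1 size).
  rewrite /suf /= erb /= size_drop size_cat /=; slia.
Qed.

Definition y1 (p : qA) : k := if nsP p then 0 else y p.
Definition y2 (p : qA) : k := if nsP p then y p else 0.

Lemma y2_ns p : y2 p != 0 -> nsP p.
Proof. by rewrite /y2; case: (nsP p); rewrite ?eqxx. Qed.

Lemma y1_cent : fcent s t Z y1.
Proof.
move=> d r ir.
pose D (p : qA) := d (jA s (gl p)).
pose la := d (w, [::]) - d (u, [::]).
pose dw (p : qA) : k := (p == (w, [::]))%:R.
have Hd : forall p, inA p -> d p = la * dw p + D p.
  move=> p ip; rewrite /D /dw /la; case: (eqVneq p (w, [::])) => [->|ne].
    by rewrite jA_glue_w mulr1 subrK.
  by rewrite (jA_glue huw ip ne) mulr0 add0r.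
rewrite (mulf_local (c' := y1) (d' := fun p => la * dw p + D p) ir) //.
rewrite [RHS](mulf_local (c' := fun p => la * dw p + D p) (d' := y1) ir) //.
rewrite mulfDr mulfDl; congr (_ * _ + _).
  rewrite mulf_trivr; last by move=> [v [|a x]] //= _; rewrite /dw xpair_eqE andbF.
  rewrite mulf_trivl; last by move=> [v [|a x]] //= _; rewrite /dw xpair_eqE andbF.
  case: (eqVneq (y1 r) 0) => [->|y1r]; first by rewrite mulr0 mul0r.
  move: y1r; rewrite /y1; case nr: (nsP r); first by rewrite eqxx.
  move=> yr.
  case: (eqVneq r.1 (pend t r)) => [e|ne]; first by rewrite mulrC e.
  by rewrite (y_ns ir yr ne) in nr.
have E1 : forall p, y1 p = -1 * y2 p + y p.
  by move=> p; rewrite /y1 /y2; case: (nsP p); rewrite ?mulr0 ?add0r // mulN1r addNr.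
rewrite (mulf_ext (c := y1) (c' := fun p => -1 * y2 p + y p) (d := D) (d' := D) t r E1 (fun _ => erefl)).
rewrite [RHS](mulf_ext (c := D) (c' := D) (d := y1) (d' := fun p => -1 * y2 p + y p) t r (fun _ => erefl) E1).
rewrite mulfDl mulfDr; congr (_ * _ + _).
  by apply: (ns_comm (fun q => d (jA s q))) => //; exact: y2_ns.
exact: (Hy (fun q => d (jA s q)) ir).
Qed.

End ClaimA.

Local Notation dA := (size bsA).
Local Notation dB := (size bsB).
Local Notation gA := (tnth (in_tuple bsA)).
Local Notation gB := (tnth (in_tuple bsB)).

Definition Phi : 'M[k]_(dA, dB) := \matrix_(i, j) (gA i == jA s (gB j))%:R.
Definition Psi : 'M[k]_(dB, dA) := \matrix_(j, i) (gB j == gl (gA i))%:R.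

Lemma uA : uniq bsA. Proof. exact: uniq_basis. Qed.
Lemma uB : uniq bsB. Proof. exact: uniq_basis. Qed.

Lemma PhiE (x : 'rV[k]_dA) : x *m Phi = vec bsB (fun q => cf x (jA s q)).
Proof. by apply/rowP => j; rewrite !mxE; apply: eq_bigr => i _; rewrite !mxE. Qed.

Lemma PsiE (x : 'rV[k]_dB) : x *m Psi = vec bsA (fun p => cf x (gl p)).
Proof. by apply/rowP => j; rewrite !mxE; apply: eq_bigr => i _; rewrite !mxE. Qed.

Lemma cf_Phi (x : 'rV[k]_dA) q : inB q -> cf (x *m Phi) q = cf x (jA s q).
Proof. by move=> iq; rewrite PhiE cf_vec ?uB ?(mem_basis HNB). Qed.

Lemma cf_Psi (x : 'rV[k]_dB) p : inA p -> cf (x *m Psi) p = cf x (gl p).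
Proof. by move=> ip; rewrite PsiE cf_vec ?uA ?(mem_basis HNA). Qed.

Lemma PsiPhi (x : 'rV[k]_dB) : x *m Psi *m Phi = x.
Proof.
rewrite PhiE -[RHS](vec_cf uB); apply: vec_eq => q; rewrite (mem_basis HNB) => iq.
have [ia e] := inA_jA HZ2 iq.
by rewrite cf_Psi // e.
Qed.

Lemma PhiPsi (x : 'rV[k]_dA) : cf x (u, [::]) = cf x (w, [::]) -> x *m Phi *m Psi = x.
Proof.
move=> exw; rewrite PsiE -[RHS](vec_cf uA); apply: vec_eq => p; rewrite (mem_basis HNA) => ip.
rewrite cf_Phi; last exact: inB_glue.
case: (eqVneq p (w, [::])) => [->|ne]; last by rewrite (jA_glue huw ip ne).
by rewrite jA_glue_w.
Qed.

Lemma row_free_Psi : row_free Psi.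
Proof.
rewrite /row_free eqn_leq rank_leq_row /=.
have e : Psi *m Phi = 1%:M.
  apply/row_matrixP => j; rewrite row_mul rowE PsiPhi.
  by rewrite rowE mulmx1.
by have := mxrankM_maxl Psi Phi; rewrite e mxrank1.
Qed.

Local Notation CA := (kermx (lin1_mx (commf s t Z k N))).
Local Notation CB := (kermx (lin1_mx (commf sB' tB' ZB' k NB))).

Lemma inCA (x : 'rV[k]_dA) : (x <= CA)%MS <-> fcent s t Z (cf x).
Proof. by rewrite (kerE HNA) (centralE HNA). Qed.

Lemma inCB (x : 'rV[k]_dB) : (x <= CB)%MS <-> fcent sB' tB' ZB' (cf x).
Proof. by rewrite (kerE HNB) (centralE HNB). Qed.

Lemma cent_Phi (x : 'rV[k]_dA) : fcent s t Z (cf x) -> fcent sB' tB' ZB' (cf (x *m Phi)).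
Proof.
move=> Hx; apply: (fcent_ext (c' := fun q => cf x (jA s q))); first exact: cf_Phi.
exact: centA_B.
Qed.

Lemma ns_Phi (x : 'rV[k]_dA) : (forall p, cf x p != 0 -> nsP p) -> fcent sB' tB' ZB' (cf (x *m Phi)).
Proof.
move=> Hx; apply: (fcent_ext (c' := fun q => cf x (jA s q))); first exact: cf_Phi.
exact: nsA_B.
Qed.

Lemma ns_uw (x : 'rV[k]_dA) : (forall p, cf x p != 0 -> nsP p) -> cf x (u, [::]) = cf x (w, [::]).
Proof.
move=> Hx; have z v : cf x (v, [::]) = 0.
  by apply/eqP; apply: contraNT (nsP_triv v) => /Hx.
by rewrite !z.
Qed.

Definition lns := [seq i <- enum 'I_dA | nsP (gA i)].
Local Notation m := (size lns).
Local Notation gl' := (tnth (in_tuple lns)).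
Definition Tm : 'M[k]_(m, dA) := \matrix_(a, i) (gl' a == i)%:R.

Lemma ulns : uniq lns.
Proof. by apply: filter_uniq; apply: enum_uniq. Qed.

Lemma mem_lns i : (i \in lns) = nsP (gA i).
Proof. by rewrite mem_filter mem_enum andbT. Qed.

Lemma size_lns : m = nsp s t Z N u w.
Proof.
have e : map gA (enum 'I_dA) = bsA := map_tnth_enum (in_tuple bsA).
rewrite /lns size_filter /nsp -[in RHS]e count_map.
by apply: eq_count.
Qed.

Lemma TTt : Tm *m Tm^T = 1%:M.
Proof.
apply/matrixP => a b; rewrite !mxE (bigD1 (gl' a)) //= !mxE eqxx mul1r big1 ?addr0.
  by rewrite (inj_eq (gb_inj ulns)) eq_sym.
by move=> i /negbTE ne; rewrite !mxE [gl' a == i]eq_sym ne mul0r.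
Qed.

Lemma rank_Tm : \rank Tm = m.
Proof.
apply/eqP; rewrite eqn_leq rank_leq_row /=.
by have := mxrankM_maxl Tm Tm^T; rewrite TTt mxrank1.
Qed.

Lemma TtT_entry j i : (Tm^T *m Tm) j i = ((j == i) && nsP (gA i))%:R.
Proof.
rewrite !mxE; case ni: (nsP (gA i)); last first.
  rewrite andbF big1 // => b _; rewrite !mxE.
  case: (eqVneq (gl' b) i) => [eb|]; last by rewrite mulr0.
  by move: (gb_mem b); rewrite eb mem_lns ni.
have : i \in lns by rewrite mem_lns.
case/(@tnthP _ _ (in_tuple lns)) => a ei.
rewrite (bigD1 a) //= big1 ?addr0.
  by rewrite !mxE -ei eqxx mulr1 andbT eq_sym.
by move=> b ne; rewrite !mxE ei (inj_eq (gb_inj ulns)) (negbTE ne) mulr0.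
Qed.

Lemma TtTE (y : 'rV[k]_dA) i : (y *m (Tm^T *m Tm)) 0 i = (nsP (gA i))%:R * y 0 i.
Proof.
rewrite mxE (bigD1 i) //= big1 ?addr0 => [|j ne].
  by rewrite TtT_entry eqxx mulrC.
by rewrite TtT_entry (negbTE ne) mulr0.
Qed.

Lemma cf_TtT (y : 'rV[k]_dA) p : inA p -> cf (y *m (Tm^T *m Tm)) p = (nsP p)%:R * cf y p.
Proof.
rewrite -(mem_basis HNA) => /(mem_gb) [i ->].
by rewrite !(cf_gb uA) // TtTE.
Qed.

Lemma cf_supp (x : 'rV[k]_dA) (P : pred qA) : (forall i, x 0 i != 0 -> P (gA i)) ->
  forall p, cf x p != 0 -> P p.
Proof.
move=> H p; case pb: (p \in bsA); last by rewrite cf_out ?pb ?eqxx.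
by case/(mem_gb) : pb => i ->; rewrite (cf_gb uA); apply: H.
Qed.

Lemma sub_Tm (x : 'rV[k]_dA) : (x <= Tm)%MS -> forall p, cf x p != 0 -> nsP p.
Proof.
case/submxP => z ->; apply: cf_supp => i.
have -> : z *m Tm = (z *m Tm) *m (Tm^T *m Tm) by rewrite mulmxA -(mulmxA z) TTt mulmx1.
by rewrite TtTE; case: (nsP (gA i)); rewrite ?mul0r ?eqxx.
Qed.

Lemma cent_loop (c : qA -> k) r : fcent s t Z c -> inA r -> c r != 0 -> r.1 = pend t r.
Proof.
move=> Hc ir cr; have := Hc (fun q => (q == (pend t r, [::]))%:R) r ir.
rewrite mulf_trivr; last by move=> [v [|a x]] //= _; rewrite xpair_eqE andbF.
rewrite mulf_trivl; last by move=> [v [|a x]] //= _; rewrite xpair_eqE andbF.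
rewrite eqxx mulr1 xpair_eqE eqxx andbT; case: eqP => // _.
by rewrite /= mulr0n mul0r => /eqP; rewrite (negbTE cr).
Qed.

Lemma CA_Tm : (CA :&: Tm)%MS = 0.
Proof.
apply/eqP; rewrite -submx0; apply/row_subP => i; set x := row i _.
have : (x <= CA :&: Tm)%MS by apply: row_sub.
rewrite sub_capmx => /andP[/inCA xc /sub_Tm xt].
suff -> : x = 0 by apply: sub0mx.
rewrite -(vec_cf uA x) -[0](vec_cf uA); apply: vec_eq => p; rewrite (mem_basis HNA) => ip.
rewrite cf0; apply/eqP; apply: contraT => nz.
by have := nsP_ne (xt _ nz); rewrite (cent_loop xc ip nz) eqxx.
Qed.

Lemma CBPsi_sub : (CB *m Psi <= CA + Tm)%MS.
Proof.
apply/row_subP => j; rewrite row_mul; set x := row j CB.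
have /inCB xc : (x <= CB)%MS by apply: row_sub.
set y := x *m Psi.
have -> : y = (y - y *m (Tm^T *m Tm)) + y *m (Tm^T *m Tm) by rewrite subrK.
apply: addmx_sub_adds; last by rewrite mulmxA submxMl.
apply/inCA; apply: (fcent_ext (c' := y1 (cf x))); last exact: y1_cent.
move=> p ip; rewrite cf_sub cf_TtT // cf_Psi // /y1.
by case: (nsP p); rewrite ?mul1r ?subrr ?mul0r ?subr0.
Qed.

Lemma CA_sub : (CA <= CB *m Psi)%MS.
Proof.
apply/row_subP => i; set x := row i CA.
have /inCA xc : (x <= CA)%MS by apply: row_sub.
rewrite -(PhiPsi (triv_eq xc)); apply: submxMr; apply/inCB; exact: cent_Phi.
Qed.

Lemma Tm_sub : (Tm <= CB *m Psi)%MS.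
Proof.
apply/row_subP => a; set x := row a Tm.
have xs : forall p, cf x p != 0 -> nsP p by apply: sub_Tm; apply: row_sub.
rewrite -(PhiPsi (ns_uw xs)); apply: submxMr; apply/inCB; exact: ns_Phi.
Qed.

Lemma dim_eq : \rank CB = (\rank CA + nsp s t Z N u w)%N.
Proof.
rewrite -(mxrankMfree CB row_free_Psi) -size_lns -rank_Tm -(mxrank_disjoint_sum CA_Tm).
apply: eqmx_rank; apply/andP; split; first exact: CBPsi_sub.
by rewrite addsmx_sub CA_sub Tm_sub.
Qed.

Lemma munitE (V' Ar' : finType) (s' t' : Ar' -> V') Z' N' :
  munit s' t' Z' k N' = vec (basis s' t' Z' N') (fun p => (p.2 == [::])%:R).
Proof. by apply/rowP => i; rewrite !mxE; case: eqP. Qed.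

Lemma cfPhi_glue (x : 'rV[k]_dA) p : fcent s t Z (cf x) -> inA p -> cf (x *m Phi) (gl p) = cf x p.
Proof.
move=> xc ip; rewrite cf_Phi; last exact: inB_glue.
case: (eqVneq p (w, [::])) => [->|ne]; last by rewrite (jA_glue huw ip ne).
by rewrite jA_glue_w (triv_eq xc).
Qed.

Lemma mono : centre_alg_mono (mmul s t Z k N) (munit s t Z k N)
  (mmul sB' tB' ZB' k NB) (munit sB' tB' ZB' k NB) (fun x => x *m Phi).
Proof.
split => [x cx|a x y _ _|x y cx cy||x y cx cy e].
- change (central sB' tB' ZB' k NB (x *m Phi)); apply/(centralE HNB).
  by apply: cent_Phi; apply/(centralE HNA).
- by rewrite mulmxDl scalemxAl.
- have /(centralE HNA) xc : central s t Z k N x by [].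
  have /(centralE HNA) yc : central s t Z k N y by [].
  rewrite (mmulE HNB) PhiE; apply: vec_eq => q; rewrite (mem_basis HNB) => iq.
  have [ia e] := inA_jA HZ2 iq.
  have ja : jA s q \in bsA by rewrite (mem_basis HNA).
  rewrite (mmulE HNA) (cf_vec uA _ ja) -[in RHS]e mulf_glue.
  by apply: (mulf_local (s := s) (Z := Z) ia) => p ip; rewrite cfPhi_glue.
- rewrite PhiE !munitE; apply: vec_eq => q; rewrite (mem_basis HNB) => iq.
  have [ia _] := inA_jA HZ2 iq.
  have ja : jA s q \in bsA by rewrite (mem_basis HNA).
  rewrite (cf_vec uA _ ja).
  by case: q {iq ia ja} => v [|a x].
- have /(centralE HNA) xc : central s t Z k N x by [].
  have /(centralE HNA) yc : central s t Z k N y by [].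
  have := congr1 (mulmx^~ Psi) e; rewrite /= !PhiPsi //; exact: triv_eq.
Qed.

End Main.

End Helpers.
Import Helpers.

Theorem proposition6p3 (k : fieldType) (V Ar : finType) (s t : Ar -> V)
  (Z : seq (seq Ar)) (u w : V) (huw : u != w) (N NB : nat) :
  relation_set s t Z ->
  fin_bound s t Z N ->
  fin_bound (sB s huw) (tB t huw) (ZB s t huw Z) NB ->
  indecomposable s t Z k N ->
  non_isolated s t u -> non_isolated s t w ->
  (exists f, centre_alg_mono (mmul s t Z k N) (munit s t Z k N)
               (mmul (sB s huw) (tB t huw) (ZB s t huw Z) k NB)
               (munit (sB s huw) (tB t huw) (ZB s t huw Z) k NB) f)
  /\ centre_dim (sB s huw) (tB t huw) (ZB s t huw Z) k NB
     = (centre_dim s t Z k N + nsp s t Z N u w)%N.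
Proof.
move=> HZ HNA HNB Hind _ _.
have HZ2 : forall z, z \in Z -> (2 <= size z)%N.
  by case: HZ => _ [H _] z zZ; case: (H z zZ).
split; first by eexists; exact: (mono HZ2 HNA HNB Hind).
exact: (dim_eq HZ2 HNA HNB Hind).
Qed.
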